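(* Let $T$ be a finite $2$-group and $H$ a finite group of odd order such that $d(T\times H)=2$ and the Frattini subgroup $\Phi(T)$ is nontrivial. Then $\mathsf{GEN}(T\times H)=*0$.
   Context: For a finite group $G$, $\mathsf{GEN}(G)$ is the following impartial two-player game. A position is a set of elements selected so far; the starting position is $\emptyset$. From a position $P$ with $\langle P\rangle\neq G$, the player to move selects some $g\in G\setminus P$, producing the position $P\cup\{g\}$ (these are the options of $P$); a position $P$ with $\langle P\rangle = G$ has no options. The nim-number of a position is defined recursively by $\operatorname{nim}(P)=\operatorname{mex}\{\operatorname{nim}(Q): Q \text{ an option of } P\}$, where $\operatorname{mex}(A)$ is the least nonnegative integer not in $A$. We write $\mathsf{GEN}(G)=*n$ if $\operatorname{nim}(\emptyset)=n$. $d(G)$ denotes the minimum size of a generating set of $G$. *)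

(* Defs.v *)
From HB Require Import structures.
From mathcomp Require Import all_boot all_order all_fingroup all_solvable.
Set Implicit Arguments. Unset Strict Implicit. Unset Printing Implicit Defensive.
Local Open Scope group_scope.

(* mex of a finite list of naturals: the least n not in s
   (always found among 0 .. size s). *)
Definition mex (s : seq nat) : nat :=
  find (fun n => n \notin s) (iota 0 (size s).+1).

Fixpoint gen_nim_fuel (gT : finGroupType) (k : nat) (G P : {set gT}) : nat :=
  if k is k'.+1 then
    if <<P>> == G then 0
    else mex [seq gen_nim_fuel k' G (P :|: [set g]) | g <- enum (G :\: P)]
  else 0.

(* Fuel #|G :\: P|.+1 is sufficient: each move decreases #|G :\: P| by one, and
   the position P = G (reached when #|G :\: P| = 0 for P \subset G) is terminal. *)
Definition gen_nim (gT : finGroupType) (G P : {set gT}) : nat :=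
  gen_nim_fuel #|G :\: P|.+1 G P.

Definition GEN (gT : finGroupType) (G : {set gT}) : nat := gen_nim G set0.

Definition gen_set_of_size (gT : finGroupType) (G : {set gT}) (n : nat) : bool :=
  [exists A : {set gT}, [&& A \subset G, #|A| == n & <<A>> == G]].

Lemma gen_set_of_size_ex (gT : finGroupType) (G : {group gT}) :
  exists n, gen_set_of_size G n.
Proof.
exists #|G|; apply/existsP; exists (G : {set gT}).
by rewrite subxx eqxx genGid eqxx.
Qed.

Definition dgen (gT : finGroupType) (G : {group gT}) : nat :=
  ex_minn (gen_set_of_size_ex G).

(* Main.v *)
Require Import Defs.
From HB Require Import structures.
From mathcomp Require Import all_boot all_order all_fingroup all_solvable.
Local Open Scope group_scope.

Lemma pairX (gT1 gT2 : finGroupType) (x : gT1 * gT2) n :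
  x ^+ n = (x.1 ^+ n, x.2 ^+ n).
Proof.
case: x => a b; elim: n => [|n IH] //=.
by rewrite !expgS IH.
Qed.

Lemma extract1 (gT1 gT2 : finGroupType) (K : {group (gT1 * gT2)}) k m :
  k \in K -> k.2 ^+ m = 1 -> coprime #[k.1] m -> (k.1, 1) \in K.
Proof.
move=> kK k2 cop.
have := generator_coprime k.1 m; rewrite cop => /eqP gen.
have : k.1 \in <[k.1 ^+ m]> by rewrite -gen cycle_id.
case/cycleP=> e He.
have -> : (k.1, 1) = (k ^+ m) ^+ e by rewrite !pairX /= k2 expg1n -He.
by rewrite !groupX.
Qed.

Lemma extract2 (gT1 gT2 : finGroupType) (K : {group (gT1 * gT2)}) k m :
  k \in K -> k.1 ^+ m = 1 -> coprime #[k.2] m -> (1, k.2) \in K.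
Proof.
move=> kK k2 cop.
have := generator_coprime k.2 m; rewrite cop => /eqP gen.
have : k.2 \in <[k.2 ^+ m]> by rewrite -gen cycle_id.
case/cycleP=> e He.
have -> : (1, k.2) = (k ^+ m) ^+ e by rewrite !pairX /= k2 expg1n -He.
by rewrite !groupX.
Qed.

Lemma gen_add1 (gT : finGroupType) (X : {set gT}) : <<X :|: [set 1]>> = <<X>>.
Proof.
apply/eqP; rewrite eqEsubset; apply/andP; split.
  by rewrite gen_subG subUset subset_gen sub1set group1.
by apply: genS; exact: subsetUl.
Qed.

Lemma nongen (gT1 gT2 : finGroupType) (T : {group gT1}) (H : {group gT2})
  (f : gT1) (A : {set gT1 * gT2}) :
  2.-group T -> odd #|H| -> f \in 'Phi(T) -> A \subset setX T H ->
  <<A :|: [set (f, 1)]>> = setX T H -> <<A>> = setX T H.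
Proof.
move=> pT oH fPhi sAG genAz.
pose f1 := fst_morphism gT1 gT2; pose f2 := snd_morphism gT1 gT2.
have hT : <<f1 @* A :|: [set f]>> = T.
  rewrite -(morphim_set1 f1 (in_setT (f, 1))) -morphimU -morphim_gen ?subsetT //.
  by rewrite genAz morphim_fstX.
have hH : <<f2 @* A>> = H.
  rewrite -gen_add1 -(morphim_set1 f2 (in_setT (f, 1))) -morphimU -morphim_gen ?subsetT //.
  by rewrite genAz morphim_sndX.
have sA1 : f1 @* A \subset T by rewrite -(morphim_fstX T H) morphimS.
have gT : <<f1 @* A>> = T.
  apply: Phi_nongen; apply/eqP; rewrite eqEsubset join_subG Phi_sub sA1 /=.
  rewrite -{1}hT /joing; apply: genS; rewrite setUC; apply: setSU; by rewrite sub1set.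
set K := <<A>>%G.
have sKG : K \subset setX T H by rewrite /K /= gen_subG.
have K1 : f1 @* K = T by rewrite morphim_gen ?subsetT.
have K2 : f2 @* K = H by rewrite morphim_gen ?subsetT.
apply/eqP; rewrite eqEsubset sKG /=; apply/subsetP => -[t h] /setXP[tT hH'].
have : t \in f1 @* K by rewrite K1.
case/morphimP => k _ kK ekt.
have : h \in f2 @* K by rewrite K2.
case/morphimP => l _ lK elh.
have kG := subsetP sKG k kK; have lG := subsetP sKG l lK.
move: kG lG; case: k kK ekt => k1 k2 kK /= ekt; case: l lK elh => l1 l2 lK /= elh.
case/setXP => k1T k2H /setXP [l1T l2H].
subst t h.
have e1 : (k1, 1) \in K.
  apply: (@extract1 _ _ K (k1, k2) #|H|) => //=; first exact: expg_cardG.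
  have /p_natP [a Ha] : 2.-nat #[k1] by apply: mem_p_elt pT k1T.
  rewrite Ha; case: a Ha => [|a] Ha; first by rewrite expn0 coprime1n.
  by rewrite coprimeXl // coprime2n.
have e2 : (1, l2) \in K.
  apply: (@extract2 _ _ K (l1, l2) #|T|) => //=; first exact: expg_cardG.
  have /p_natP [a Ha] : 2.-nat #|T| by [].
  rewrite Ha; case: a Ha => [|a] Ha; first by rewrite expn0 coprimen1.
  rewrite coprimeXr // coprimen2.
  exact: dvdn_odd (order_dvdG l2H) oH.
have -> : (k1, l2) = (k1, 1) * (1, l2) by change ((k1, l2) = (k1 * 1, 1 * l2)); rewrite mulg1 mul1g.
by rewrite groupM.
Qed.

Lemma mex0 s : 0 \notin s -> mex s = 0.
Proof. by rewrite /mex /= => ->. Qed.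

Lemma mexn0 s : 0 \in s -> mex s != 0.
Proof. by rewrite /mex /= => ->. Qed.

Lemma Nunfold (gT : finGroupType) (G P : {set gT}) :
  gen_nim_fuel #|G :\: P|.+1 G P =
  if <<P>> == G then 0 else
  mex [seq gen_nim_fuel #|G :\: (P :|: [set g])|.+1 G (P :|: [set g]) | g <- enum (G :\: P)].
Proof.
rewrite /=; case: eqP => // _; congr mex; apply/eq_in_map => g.
by rewrite mem_enum => gin; rewrite (cardsD1 g (G :\: P)) gin setDDl.
Qed.

Lemma game (gT : finGroupType) (G : {group gT}) (z : gT) :
  z \in G -> z != 1 -> z * z = 1 ->
  (forall A : {set gT}, A \subset G -> <<A :|: [set z]>> = G -> <<A>> = G) ->
  (forall y, y \in G -> <<[set y]>> != G) ->
  gen_nim G set0 = 0.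
Proof.
move=> zG zn1 zz hz h1.
pose N (P : {set gT}) := gen_nim_fuel #|G :\: P|.+1 G P.
have NU P : N P = if <<P>> == G then 0 else
    mex [seq N (P :|: [set g]) | g <- enum (G :\: P)] by exact: Nunfold.
suff main : forall n P, #|G :\: P| <= n -> P \subset G ->
   {in P, forall p, p * z \in P} ->
   (forall y, y \in G -> <<P :|: [set y]>> != G) -> N P = 0.
  apply: (main _ set0 (leqnn _)); first exact: sub0set; first by move=> y; rewrite inE.
  by move=> y yG; rewrite set0U; apply: h1.
elim=> [|n IH] P hc sPG cP nP.
  rewrite NU; case: ifP => // _.
  move: hc; rewrite leqn0 cards_eq0 => /eqP ->.
  by rewrite enum_set0.
have nPG : <<P>> != G.
  apply: contra (nP 1 (group1 G)) => /eqP eP.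
  rewrite eqEsubset gen_subG subUset sPG sub1set group1 /= -{1}eP genS //.
  exact: subsetUl.
rewrite NU (negbTE nPG); apply: mex0; apply/mapP => -[x].
rewrite mem_enum => /setDP [xG xP] NQ0.
set Q := P :|: [set x] in NQ0.
have nQ : <<Q>> != G := nP x xG.
have cPQ : #|G :\: P| = (#|G :\: Q|).+1.
  by rewrite (cardsD1 x (G :\: P)) inE xP xG setDDl.
suff h0 : 0 \in [seq N (Q :|: [set g]) | g <- enum (G :\: Q)].
  have e := NU Q; rewrite (negbTE nQ) in e.
  by move: (mexn0 _ h0); rewrite -e -NQ0.
case: (boolP [exists y in G, <<Q :|: [set y]>> == G]).
  case/exists_inP => y yG /eqP gy; apply/mapP; exists y.
    rewrite mem_enum inE yG andbT; apply: contra nQ => yQ.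
    by rewrite -gy; apply/eqP; congr <<_>>; symmetry; apply/setUidPl; rewrite sub1set.
  by rewrite NU gy eqxx.
move/exists_inPn => noy.
have yG : x * z \in G by rewrite groupM.
have yx : x * z != x.
  apply/eqP => e; move: zn1; have := congr1 (mulg x^-1) e.
  by rewrite mulKg mulVg => ->; rewrite eqxx.
have yP : x * z \notin P.
  apply: contra xP => yP; have := cP _ yP; by rewrite -mulgA zz mulg1.
have yQ : x * z \notin Q by rewrite !inE negb_or yP yx.
apply/mapP; exists (x * z); first by rewrite mem_enum inE yG andbT.
symmetry; apply: IH.
- move: hc; rewrite cPQ (cardsD1 (x * z) (G :\: Q)) inE yQ yG setDDl.
  by rewrite add1n ltnS => /ltnW.
- by rewrite !subUset sPG !sub1set xG yG.
- move=> p; rewrite !inE => /orP [/orP [pP | /eqP ->] | /eqP ->].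
  + by rewrite cP.
  + by rewrite eqxx orbT.
  + by rewrite -mulgA zz mulg1 eqxx orbT.
- move=> w wG; apply/negP => /eqP gR.
  have := noy w wG; apply/negP; rewrite negbK; apply/eqP; apply: hz.
    by rewrite !subUset sPG !sub1set xG wG.
  apply/eqP; rewrite eqEsubset gen_subG !subUset sPG !sub1set xG wG zG /=.
  set L := <<Q :|: [set w] :|: [set z]>>.
  have mx : x \in L by apply: mem_gen; rewrite !inE eqxx !orbT.
  have mw : w \in L by apply: mem_gen; rewrite !inE eqxx !orbT.
  have mz : z \in L by apply: mem_gen; rewrite !inE eqxx !orbT.
  have sP : P \subset L.
    by apply/subsetP => p pP; apply: mem_gen; rewrite !inE pP.
  by rewrite -{1}gR gen_subG !subUset !sub1set sP mx mw groupM.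
Qed.

Theorem proposition4p6 (gT1 gT2 : finGroupType) (T : {group gT1}) (H : {group gT2}) :
  2.-group T -> odd #|H| ->
  dgen (setX T H)%G = 2 ->
  'Phi(T) != 1 ->
  GEN (setX T H) = 0.
Proof.
move=> pT oH hd ntPhi.
have pPhi : 2.-group 'Phi(T) := pgroupS (Phi_sub T) pT.
have [_ d2 _] := pgroup_pdiv pPhi ntPhi.
have [f fPhi of2] := Cauchy (isT : prime 2) d2.
have fT : f \in T := subsetP (Phi_sub T) f fPhi.
have ff : f * f = 1 by rewrite -expg2 -of2 expg_order.
rewrite /GEN.
apply: (@game _ (setX_group T H) (f, 1)).
- by apply/setXP; split.
- apply/eqP => e; have ef : f = 1 by case: e.
  by move: of2; rewrite ef order1.
- by change ((f * f, 1 * 1) = (1, 1) :> gT1 * gT2); rewrite ff mulg1.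
- move=> A sA h; exact: (@nongen _ _ T H f A pT oH fPhi sA h).
- move=> y yG; apply/negP => /eqP gy.
  have hs : gen_set_of_size (setX_group T H) 1.
    by apply/existsP; exists [set y]; rewrite sub1set yG cards1 /= gy eqxx.
  move: hd; rewrite /dgen; case: ex_minnP => m _ hmin hm2.
  by have := hmin 1%N hs; rewrite hm2.
Qed.
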